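(* Let $P$ be a poset, $\mathcal{U}$ a join-specification for $P$, and $S\subseteq P$. Then $\Upsilon_{\mathcal{U}}(S)$ is the smallest $\mathcal{U}$-ideal containing $S$ if and only if $\Upsilon_{\mathcal{U}}(S)$ is down-closed.
   Context: For $S\subseteq P$, $S^\downarrow=\{p\in P:p\le s\text{ for some }s\in S\}$. A join-specification for $P$ is a set $\mathcal{U}\subseteq\wp(P)$ such that $\bigvee S$ exists in $P$ for every $S\in\mathcal{U}$ and $\{p\}\in\mathcal{U}$ for every $p\in P$. A $\mathcal{U}$-ideal is a down-closed $C\subseteq P$ with $\bigvee S\in C$ whenever $S\in\mathcal{U}$, $S\subseteq C$; $\Gamma_{\mathcal{U}}(S)$ is the smallest $\mathcal{U}$-ideal containing $S$. $\mathcal{U}^+=\{S\subseteq P:\bigvee S\text{ exists and }\bigvee S\in\Gamma_{\mathcal{U}}(S)\}$, and $\Upsilon_{\mathcal{U}}(S)=\{\bigvee T:T\in\mathcal{U}^+,\ T\subseteq S^\downarrow\}$. *)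

(* Defs.v *)
(* posets are MathComp `porderType`s; subsets of P are
   predicates `T -> Prop` (arbitrary, possibly infinite subsets). *)
From mathcomp Require Import all_boot all_order.
Set Implicit Arguments. Unset Strict Implicit. Unset Printing Implicit Defensive.
Import Order.Theory.
Local Open Scope order_scope.

Section Defs.
Context {d : Order.disp_t} {T : porderType d}.

Definition subsetP (A B : T -> Prop) : Prop := forall x, A x -> B x.

Definition is_join (S : T -> Prop) (x : T) : Prop :=
  (forall s, S s -> s <= x) /\ (forall y, (forall s, S s -> s <= y) -> x <= y).

Definition downset (S : T -> Prop) : T -> Prop :=
  fun p => exists2 s, S s & p <= s.

Definition down_closed (C : T -> Prop) : Prop :=
  forall p q, q <= p -> C p -> C q.

Definition join_spec (U : (T -> Prop) -> Prop) : Prop :=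
  (forall S, U S -> exists x, is_join S x) /\
  (forall p : T, U (fun q => q = p)).

Definition U_ideal (U : (T -> Prop) -> Prop) (C : T -> Prop) : Prop :=
  down_closed C /\
  (forall S, U S -> subsetP S C -> forall x, is_join S x -> C x).

Definition Gamma (U : (T -> Prop) -> Prop) (S : T -> Prop) : T -> Prop :=
  fun p => forall C, U_ideal U C -> subsetP S C -> C p.

Definition Uplus (U : (T -> Prop) -> Prop) (S : T -> Prop) : Prop :=
  exists x, is_join S x /\ Gamma U S x.

Definition Upsilon (U : (T -> Prop) -> Prop) (S : T -> Prop) : T -> Prop :=
  fun x => exists A, [/\ Uplus U A, subsetP A (downset S) & is_join A x].

Definition smallest_U_ideal_containing (U : (T -> Prop) -> Prop)
  (S C : T -> Prop) : Prop :=
  [/\ U_ideal U C, subsetP S C &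
      forall D, U_ideal U D -> subsetP S D -> subsetP C D].

End Defs.

(* Main.v *)
Require Import Defs.
From mathcomp Require Import all_boot all_order.
Import Order.Theory.
Local Open Scope order_scope.

Lemma join_uniq {d : Order.disp_t} {T : porderType d} {A : T -> Prop} {x y : T} :
  is_join A x -> is_join A y -> x = y.
Proof.
move=> [ux lx] [uy ly]; apply/le_anti; rewrite lx // ly //.
Qed.

Theorem lemma3p6 (d : Order.disp_t) (T : porderType d)
  (U : (T -> Prop) -> Prop) (S : T -> Prop) :
  join_spec U ->
  (smallest_U_ideal_containing U S (Upsilon U S) <-> down_closed (Upsilon U S)).
Proof.
move=> _; split; first by case=> [[]].
move=> dc; split.
- split=> // B HB sB x [ubx lbx].
  pose A' := fun p => downset S p /\ p <= x.
  have key : forall b, B b -> exists Ab, [/\ Defs.subsetP Ab A', is_join Ab b &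
     forall C, U_ideal U C -> Defs.subsetP A' C -> C b].
    move=> b Bb; case: (sB b Bb) => [Ab [[y [jy gy]] sAb jb]].
    have eyb := join_uniq jy jb; subst y.
    exists Ab; split=> //.
    + move=> p Ap; split; first exact: sAb.
      apply: le_trans (ubx _ _); last exact: Bb.
      by case: jb => h _; apply: h.
    + move=> C iC sC; apply: gy => // p Ap; apply: sC.
      split; first exact: sAb.
      apply: le_trans (ubx _ _); last exact: Bb.
      by case: jb => h _; apply: h.
  exists A'; split.
  + exists x; split.
    * split; first by move=> s [].
      move=> y uy; apply: lbx => b Bb.
      have [Ab [sA [ub lb] _]] := key b Bb.
      by apply: lb => s As; apply: uy; apply: sA.
    * move=> C iC sC; case: (iC) => _ iC2; apply: (iC2 B HB _ x); last by split.
      move=> b Bb; have [Ab [_ _ g]] := key b Bb; exact: g.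
  + by move=> p [].
  + split; first by move=> s [].
    move=> y uy; apply: lbx => b Bb.
    have [Ab [sA [ub lb] _]] := key b Bb.
    by apply: lb => s As; apply: uy; apply: sA.
- move=> s Ss; exists (fun q => q = s); split.
  + exists s; split; first by split=> [q ->|y h]; [|apply: h].
    by move=> C _ sC; apply: sC.
  + by move=> q ->; exists s.
  + by split=> [q ->|y h]; [|apply: h].
- move=> D [dD iD] sD x [A [[y [jy gy]] sA jx]].
  have eyx := join_uniq jy jx; subst y.
  apply: (gy D); first by split.
  move=> p /sA [s Ss ps]; apply: dD ps _; exact: sD.
Qed.
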